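(* Let $G\in\mathcal{C}$, let $H$ be a hole of $G$, let $v$ be a major vertex for $H$, let $u$ be a clone of $y$ in $H$, and suppose $uv\in E(G)$. If $yv\notin E(G)$, then $u$ and $v$ have a common neighbor in $H$.
   Context: All graphs are finite and simple; paths are induced paths; a hole is an induced cycle of length at least four. $\mathcal{C}$ is the class of graphs containing no theta, pyramid, prism or turtle as an induced subgraph, where: a theta consists of two nonadjacent vertices $a,b$ and three paths from $a$ to $b$, otherwise vertex-disjoint, any two of which induce a hole; a pyramid consists of a vertex $a$, a triangle $\{b_1,b_2,b_3\}$ and paths $P_i$ from $a$ to $b_i$, pairwise disjoint except at $a$, any two of which induce a hole; a prism consists of two disjoint triangles $\{a_1,a_2,a_3\},\{b_1,b_2,b_3\}$ and pairwise disjoint paths $P_i$ from $a_i$ to $b_i$, any two of which induce a hole; a turtle consists of disjoint paths $P_1$ (from $a_1$ to $b_1$), $P_2$ (from $a_2$ to $b_2$) with $a_1a_2,b_1b_2$ edges and $V(P_1)\cup V(P_2)$ inducing a hole, plus adjacent vertices $x,y$ where $x$ has at least three neighbors in $P_1$ and none in $P_2$, and $y$ has at least three neighbors in $P_2$ and none in $P_1$. For a hole $H$ and $u\notin V(H)$, $N_H(u)$ is the set of neighbors of $u$ in $H$. A vertex $u\notin V(H)$ is minor for $H$ if $N_H(u)\neq\emptyset$ and $N_H(u)$ is contained in the vertex set of some three-vertex subpath of $H$; it is major for $H$ if $N_H(u)\ne\emptyset$ and $u$ is not minor. A vertex $u\notin V(H)$ is a clone of $y\in V(H)$ if $N_H(u)=\{x,y,z\}$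 where $x\text{-}y\text{-}z$ is a subpath of $H$. *)

(* Defs.v *)
From mathcomp Require Import all_boot.
Set Implicit Arguments. Unset Strict Implicit. Unset Printing Implicit Defensive.

Section Graphs.
Variables (T : finType) (e : rel T).

Definition simple_graph := symmetric e /\ irreflexive e.

Definition ind_path_from (a b : T) (p : seq T) : Prop :=
  [/\ p != [::], head a p = a, last a p = b, uniq p &
      forall i j, i < size p -> j < size p ->
        e (nth a p i) (nth a p j) = (i == j.+1) || (j == i.+1)].

(* c lists the vertices of a hole (induced cycle, length >= 4) in cyclic order. *)
Definition is_hole (c : seq T) : Prop :=
  [/\ 4 <= size c, uniq c &
      forall x0 i j, i < size c -> j < size c ->
        e (nth x0 c i) (nth x0 c j) =
        (j == i.+1 %% size c) || (i == j.+1 %% size c)].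

Definition induces_hole (s : seq T) : Prop :=
  exists c, is_hole c /\ c =i s.

Definition triangle (x y z : T) := [&& e x y, e y z & e x z].

Definition meet_within (p q : seq T) (A : seq T) :=
  forall x, x \in p -> x \in q -> x \in A.

Definition has_theta : Prop :=
  exists a b P1 P2 P3,
    [/\ a != b, ~~ e a b,
        [/\ ind_path_from a b P1, ind_path_from a b P2 & ind_path_from a b P3],
        [/\ meet_within P1 P2 [:: a; b], meet_within P1 P3 [:: a; b]
          & meet_within P2 P3 [:: a; b]] &
        [/\ induces_hole (P1 ++ P2), induces_hole (P1 ++ P3)
          & induces_hole (P2 ++ P3)]].

Definition has_pyramid : Prop :=
  exists a b1 b2 b3 P1 P2 P3,
    [/\ triangle b1 b2 b3,
        [/\ ind_path_from a b1 P1, ind_path_from a b2 P2 & ind_path_from a b3 P3],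
        [/\ meet_within P1 P2 [:: a], meet_within P1 P3 [:: a]
          & meet_within P2 P3 [:: a]] &
        [/\ induces_hole (P1 ++ P2), induces_hole (P1 ++ P3)
          & induces_hole (P2 ++ P3)]].

Definition has_prism : Prop :=
  exists a1 a2 a3 b1 b2 b3 P1 P2 P3,
    [/\ [/\ triangle a1 a2 a3, triangle b1 b2 b3 &
        all (fun x => x \notin [:: b1; b2; b3]) [:: a1; a2; a3]],
        [/\ ind_path_from a1 b1 P1, ind_path_from a2 b2 P2 & ind_path_from a3 b3 P3],
        [/\ meet_within P1 P2 [::], meet_within P1 P3 [::]
          & meet_within P2 P3 [::]] &
        [/\ induces_hole (P1 ++ P2), induces_hole (P1 ++ P3)
          & induces_hole (P2 ++ P3)]].

Definition has_turtle : Prop :=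
  exists a1 b1 a2 b2 P1 P2 x y,
    [/\ [/\ ind_path_from a1 b1 P1, ind_path_from a2 b2 P2 & meet_within P1 P2 [::]],
        [/\ e a1 a2, e b1 b2 & induces_hole (P1 ++ P2)],
        [/\ e x y, x \notin P1 ++ P2 & y \notin P1 ++ P2] &
        [/\ 3 <= count (e x) P1, ~~ has (e x) P2,
            3 <= count (e y) P2 & ~~ has (e y) P1]].

Definition in_class_C : Prop :=
  [/\ ~ has_theta, ~ has_pyramid, ~ has_prism & ~ has_turtle].

Definition NH (c : seq T) (u : T) : {set T} := [set w | (w \in c) && e u w].

Definition subpath3 (c : seq T) (x y z : T) : Prop :=
  exists2 i, i < size c &
    [/\ x = nth x c i, y = nth x c (i.+1 %% size c) & z = nth x c (i.+2 %% size c)].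

Definition minor (c : seq T) (u : T) : Prop :=
  [/\ u \notin c, NH c u != set0 &
      exists x y z, subpath3 c x y z /\ NH c u \subset [set x; y; z]].

Definition major (c : seq T) (u : T) : Prop :=
  [/\ u \notin c, NH c u != set0 & ~ minor c u].

Definition clone (c : seq T) (u y : T) : Prop :=
  u \notin c /\ exists x z, subpath3 c x y z /\ NH c u = [set x; y; z].

End Graphs.

(* Main.v *)
Require Import Defs.
From mathcomp Require Import all_boot.
From mathcomp Require Import zify.
Set Implicit Arguments. Unset Strict Implicit. Unset Printing Implicit Defensive.

Section H.
Variables (T : finType) (e : rel T).

Lemma mod_succ n a : a < n -> a.+1 %% n = (if a.+1 == n then 0 else a.+1).
Proof. move=> h; case: eqP => [->|h2]; first by rewrite modnn. rewrite modn_small //; lia. Qed.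

Lemma hole_adj c x0 i j : is_hole e c -> i < size c -> j < size c ->
  e (nth x0 c i) (nth x0 c j) = [|| j == i.+1, i == j.+1,
     (i == 0) && (j.+1 == size c) | (j == 0) && (i.+1 == size c)].
Proof.
move=> [h4 _ H] hi hj; rewrite H // !mod_succ //.
by case: ifP => /eqP ?; case: ifP => /eqP ?; lia.
Qed.

Lemma nth_rot x0 (s : seq T) k t : k <= size s -> t < size s ->
  nth x0 (rot k s) t = nth x0 s ((t + k) %% size s).
Proof.
move=> hk ht; rewrite /rot nth_cat size_drop.
case: ltnP => h.
  by rewrite nth_drop modn_small; [congr nth; lia| lia].
rewrite nth_take; last lia.
have -> : (t + k) %% size s = t - (size s - k).
  have -> : t + k = (t - (size s - k)) + size s by lia.
  by rewrite modnDr modn_small; lia.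
by [].
Qed.

Lemma rot_hole c k : is_hole e c -> is_hole e (rot k c).
Proof.
case: (leqP (size c) k) => hk; first by rewrite rot_oversize.
move=> [h4 hu H]; split; rewrite ?size_rot ?rot_uniq //.
move=> x0 i j hi hj; rewrite !nth_rot; try lia.
rewrite H; try (apply: ltn_pmod; lia).
have modS a : ((a %% size c).+1) %% size c = a.+1 %% size c.
  by rewrite -addn1 modnDml addn1.
congr orb; apply/eqP/eqP.
- move=> E; rewrite -(modn_small hj); apply/eqP.
  by rewrite -(eqn_modDr k) E modS addSn.
- by move=> ->; rewrite modS modnDml addSn.
- move=> E; rewrite -(modn_small hi); apply/eqP.
  by rewrite -(eqn_modDr k) E modS addSn.
- by move=> ->; rewrite modS modnDml addSn.
Qed.


Lemma modS1 n a : ((a %% n).+1) %% n = a.+1 %% n.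
Proof. by rewrite -addn1 modnDml addn1. Qed.
Lemma modS2 n a : ((a %% n).+2) %% n = a.+2 %% n.
Proof. by rewrite -addn2 modnDml addn2. Qed.

Lemma rot_sub3 (c : seq T) k p q r : subpath3 (rot k c) p q r -> subpath3 c p q r.
Proof.
case: (leqP (size c) k) => hk; first by rewrite rot_oversize.
case=> t; rewrite size_rot => ht [-> -> ->].
exists ((t + k) %% size c); first by apply: ltn_pmod; lia.
rewrite !nth_rot; try lia; try (apply: ltn_pmod; lia).
split; first by apply: set_nth_default; apply: ltn_pmod; lia.
  by congr nth; rewrite modS1 modnDml addSn.
by congr nth; rewrite modS2 modnDml !addSn.
Qed.

Lemma sub3_cat (X : seq T) p q r Y : subpath3 (X ++ p :: q :: r :: Y) p q r.
Proof.
exists (size X); first by rewrite size_cat /=; lia.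
rewrite !modn_small ?size_cat /=; try lia.
rewrite -[(size X).+2]addn2 -[(size X).+1]addn1 !nth_cat ltnn !ltnNge !leq_addr /=.
by rewrite subnn !addKn.
Qed.

Lemma arc (c : seq T) X a p Y : is_hole e c -> c = X ++ a :: p ++ Y -> X ++ Y != [::] ->
  ind_path_from e a (last a p) (a :: p).
Proof.
move=> Hc Ec nXY; have [h4 hu _] := Hc.
have hu' : uniq (a :: p).
  by move: hu; rewrite Ec cat_uniq => /and3P [_ _]; rewrite -cat_cons cat_uniq => /andP[].
split => // i j hi hj.
have E t : t < size (a :: p) -> nth a (a :: p) t = nth a c (size X + t).
  by move=> ht; rewrite Ec nth_cat ltnNge leq_addr /= addKn -cat_cons nth_cat ht.
have hs : size c = size X + (size p).+1 + size Y by rewrite Ec !size_cat /= size_cat; lia.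
have hXY : 0 < size X + size Y by move: nXY; rewrite -size_eq0 size_cat lt0n.
move: (hi) (hj); rewrite /= => hi' hj'.
rewrite !E // hole_adj //; rewrite ?hs; lia.
Qed.

Lemma rev_ind (a b : T) p : ind_path_from e a b p -> ind_path_from e b a (rev p).
Proof.
case: p => [[]//|p0 p [_ /= Eh Hl hu H]]; subst a.
split; rewrite ?rev_uniq //.
- by rewrite rev_cons; case: (rev p).
- rewrite -nth0 nth_rev //.
  have -> : size (p0 :: p) - 1 = (size (p0 :: p)).-1 by rewrite subn1.
  by rewrite nth_last.
- by rewrite rev_cons last_rcons.
move=> i j; rewrite size_rev => hi hj.
rewrite !nth_rev //.
rewrite !(set_nth_default p0 b); try (simpl in *; lia).
rewrite H; simpl in *; lia.
Qed.


Lemma cyc_hole v (a b : T) p : symmetric e -> irreflexive e ->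
  ind_path_from e a b p -> 3 <= size p -> v \notin p ->
  (forall w, w \in p -> e v w = (w == a) || (w == b)) -> is_hole e (v :: p).
Proof.
move=> sym irr [pn Eh El hu H] h3 vn F.
split; [by rewrite /=; lia | by rewrite /= vn hu |].
move=> x0 i j; rewrite /= => hi hj.
have hp : 0 < size p by clear -h3; lia.
have Fv t : t < size p -> e v (nth a p t) = (t == 0) || (t == (size p).-1).
  move=> ht; rewrite F ?mem_nth //.
  rewrite -{2}Eh -nth0 nth_uniq //; try lia.
  by rewrite -El -nth_last nth_uniq //; rewrite ?ltn_predL; lia.
case: i hi => [|i] hi; case: j hj => [|j] hj /=.
- by rewrite irr modn_small //; lia.
- rewrite (set_nth_default a) ?Fv; try lia.
  rewrite (modn_small (_ : 1 < _)) ?mod_succ; try lia.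
  by case: ifP => /eqP ?; lia.
- rewrite sym (set_nth_default a) ?Fv; try lia.
  rewrite (modn_small (_ : 1 < _)) ?mod_succ; try lia.
  by case: ifP => /eqP ?; lia.
- rewrite !(set_nth_default a) ?H; try lia.
  rewrite !mod_succ; try lia.
  by case: ifP => /eqP ?; case: ifP => /eqP ?; lia.
Qed.

Lemma split_first (P : pred T) Q : has P Q ->
  exists X a Y, [/\ Q = X ++ a :: Y, P a & ~~ has P X].
Proof.
elim: Q => [|q Q IH] //= /orP [Pq|hQ].
  by exists [::], q, Q.
case: (boolP (P q)) => Pq; first by exists [::], q, Q.
have [X [a [Y [-> Pa nX]]]] := IH hQ.
by exists (q :: X), a, Y; rewrite /= negb_or Pq nX.
Qed.

Lemma seq_cases (P : pred T) Q : has P Q ->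
  [\/ 3 <= count P Q,
      exists X a Y, [/\ Q = X ++ a :: Y, P a, ~~ has P X & ~~ has P Y],
      exists X a b Y, [/\ Q = X ++ a :: b :: Y, P a, P b, ~~ has P X & ~~ has P Y] |
      exists X a M b Y, [/\ Q = X ++ a :: M ++ b :: Y, M != [::], P a, P b &
         [/\ ~~ has P X, ~~ has P M & ~~ has P Y]]].
Proof.
move=> /split_first [X [a [R [-> Pa nX]]]].
case: (boolP (has P R)) => hR; last by apply: Or42; exists X, a, R.
have [M [b [Y [ER Pb nM]]]] := split_first hR.
case: (boolP (has P Y)) => hY.
  apply: Or41; rewrite count_cat /= ER count_cat /= Pa Pb.
  by move: hY; rewrite has_count; lia.
case: M ER nM => [|m M] ER nM.
  by apply: Or43; exists X, a, b, Y; rewrite ER.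
by apply: Or44; exists X, a, (m :: M), b, Y; rewrite ER.
Qed.

Lemma last2 (L : seq T) : 2 <= size L -> exists X p q, L = X ++ [:: p; q].
Proof.
case/lastP: L => [|L q] //; case/lastP: L => [|L p] //.
by exists L, p, q; rewrite -!cats1 -catA.
Qed.

Lemma last1 (L : seq T) : 1 <= size L -> exists X q, L = X ++ [:: q].
Proof. by case/lastP: L => [|L q] //; exists L, q; rewrite -!cats1. Qed.

Lemma uniq_disj (A B C : seq T) w : uniq (A ++ B ++ C) -> w \in B -> w \in A ++ C -> False.
Proof.
rewrite uniq_catCA cat_uniq => /and3P [_ /hasPn H _] wB wAC.
by move: (H _ wAC); rewrite wB.
Qed.

Lemma hole_ends a s : is_hole e (a :: s) -> e a (last a s).
Proof.
move=> Hc; have [h4 _ _] := Hc.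
have -> : last a s = nth a (a :: s) (size s).
  by rewrite -[size s]/((size (a::s)).-1) nth_last.
rewrite -[X in e X _]/(nth a (a :: s) 0) hole_adj //=; lia.
Qed.

Lemma hole_cons X a b Y : is_hole e (X ++ a :: b :: Y) -> e a b.
Proof.
move=> Hc; have [h4 _ _] := Hc.
have Ea : a = nth a (X ++ a :: b :: Y) (size X) by rewrite nth_cat ltnn subnn.
have Eb : b = nth a (X ++ a :: b :: Y) (size X).+1.
  by rewrite nth_cat ltnNge leqnSn /= subSn // subnn.
rewrite [X in e X _]Ea [X in e _ X]Eb hole_adj // ?size_cat /=; lia.
Qed.

End H.

Ltac memsolve := rewrite ?(mem_cat, inE, mem_rev, in_cons);
  do ! case: (_ == _); do ! case: (_ \in _); by [].

Theorem lemma2p3 (T : finType) (e : rel T) (c : seq T) (u v y : T) :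
  simple_graph e -> in_class_C e -> is_hole e c ->
  major e c v -> clone e c u y -> e u v -> ~~ e y v ->
  exists2 w, w \in c & e u w && e v w.
Proof.
move=> [sym irr] [noth nopyr nopri notur] Hc [vnc NHv nmin]
  [unc [x [z [[i hi [ex ey ez]] NHu]]]] euv nyv.
have [h4 huc _] := Hc.
have NHuP w : (w \in c) && e u w = (w == x) || (w == y) || (w == z).
  by have := congr1 (fun S : {set T} => w \in S) NHu; rewrite !inE.
have xc : x \in c by rewrite ex mem_nth.
have c0 : 0 < size c by apply: leq_ltn_trans hi.
have yc : y \in c by rewrite ey mem_nth // ltn_pmod.
have zc : z \in c by rewrite ez mem_nth // ltn_pmod.
have eux : e u x by have := NHuP x; rewrite xc eqxx /= => ->.
have euy : e u y by have := NHuP y; rewrite yc eqxx /= orbT => ->.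
have euz : e u z by have := NHuP z; rewrite zc eqxx /= orbT => ->.
case: (boolP (e v x)) => evx; first by exists x; rewrite // eux.
case: (boolP (e v z)) => evz; first by exists z; rewrite // euz.
exfalso.
have evy : e v y = false by rewrite sym; apply/negbTE.
move/negbTE: evx => evx; move/negbTE: evz => evz.
have hi' : i <= size c by apply: ltnW.
have h1 : 1 < size c by apply: leq_ltn_trans h4.
have h2 : 2 < size c by apply: leq_ltn_trans h4.
have n0 : nth x (rot i c) 0 = x by rewrite nth_rot // add0n modn_small.
have n1 : nth x (rot i c) 1 = y by rewrite nth_rot // add1n.
have n2 : nth x (rot i c) 2 = z by rewrite nth_rot // add2n.
have Hc1 := rot_hole i Hc.
have mem1 w : (w \in c) = (w \in rot i c) by rewrite mem_rot.
have sub1 p q r : subpath3 (rot i c) p q r -> subpath3 c p q r by apply: rot_sub3.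
have sz : size (rot i c) = size c by rewrite size_rot.
move: n0 n1 n2 Hc1 mem1 sub1 sz.
case: (rot i c) => [|a0 [|a1 [|a2 Q]]] //=; try (move=> _ _ _ _ _ _; move: h4; clear; lia).
move=> -> -> -> Hc1 mem1 sub1 _.
have hu1 : uniq [:: x, y, z & Q] by have [_ ? _] := Hc1.
have vnc1 : v \notin [:: x, y, z & Q] by rewrite -mem1.
have unc1 : u \notin [:: x, y, z & Q] by rewrite -mem1.
have inQ w : w \in [:: x, y, z & Q] -> e v w -> w \in Q.
  by rewrite !inE => /or4P [/eqP->|/eqP->|/eqP->|] //; rewrite ?evx ?evy ?evz.
have hasQ : has (e v) Q.
  case/set0Pn: NHv => w; rewrite inE => /andP [wc ew].
  by apply/hasP; exists w => //; apply: inQ => //; rewrite -mem1.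
have nminor' p q r : subpath3 [:: x, y, z & Q] p q r ->
    (forall w, w \in [:: x, y, z & Q] -> e v w -> (w == p) || (w == q) || (w == r)) -> False.
  move=> sp Hw; apply: nmin; split => //; exists p, q, r; split; first exact: sub1.
  apply/subsetP => w; rewrite inE => /andP [wc ew]; rewrite !inE; apply: Hw => //.
  by rewrite -mem1.
have [cnt|[X [a [Y [EQ va nX nY]]]]|[X [a [b [Y [EQ va vb nX nY]]]]]|
      [X [a [M [b [Y [EQ nM va vb [nX nMM nY]]]]]]]] := seq_cases hasQ.
- case: Q cnt hasQ hu1 vnc1 unc1 Hc1 mem1 sub1 inQ nminor' => [|q0 Q'] // cnt _ hu1 vnc1 unc1 Hc1 mem1 _ _ _.
  have mm w : (w \in [:: x; y; z] ++ rev (q0 :: Q')) = (w \in [:: x, y, z, q0 & Q']).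
    memsolve.
  have nux w : w \in q0 :: Q' -> e u w -> False.
    move=> wQ ew; have wB : w \in [:: x; y; z].
      have := NHuP w; rewrite ew andbT mem1; move: wQ; memsolve.
    exact: (@uniq_disj _ [::] [:: x; y; z] (q0 :: Q') w hu1 wB wQ).
  apply: notur; exists x, z, (last q0 Q'), q0, [:: x; y; z], (rev (q0 :: Q')), u, v.
  split.
  + split.
    * exact: (arc (X := [::]) (a := x) (p := [:: y; z]) (Y := q0 :: Q') Hc1).
    * apply: rev_ind.
      by apply: (arc (X := [:: x; y; z]) (a := q0) (p := Q') (Y := [::]) Hc1); rewrite cats0.
    * move=> w wB; rewrite mem_rev => wC; exfalso.
      exact: (@uniq_disj _ [::] [:: x; y; z] (q0 :: Q') w hu1 wB wC).
  + split.
    * exact: hole_ends Hc1.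
    * exact: (@hole_cons _ _ [:: x; y] z q0 Q' Hc1).
    * by exists [:: x, y, z, q0 & Q']; split => // w; rewrite mm.
  + by split => //; rewrite mm.
  + split.
    * by rewrite /= eux euy euz.
    * by rewrite has_rev; apply/hasP => [[w wQ ew]]; apply: (nux w).
    * by rewrite count_rev.
    * by rewrite /= evx evy evz.
- have [X'' [p [q EL]]] := @last2 _ [:: x, y, z & X] isT.
  apply: (nminor' p q a).
    have -> : [:: x, y, z & Q] = X'' ++ [:: p, q, a & Y].
      by rewrite EQ -[x :: _]/([:: x, y, z & X] ++ a :: Y) EL -catA.
    exact: sub3_cat.
  move=> w wc ew; have := inQ w wc ew; rewrite EQ mem_cat inE => /or3P [wX|/eqP->|wY].
  + by move: (hasPn nX w wX); rewrite ew.
  + by rewrite eqxx orbT.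
  + by move: (hasPn nY w wY); rewrite ew.
- have [X'' [q EL]] := @last1 _ [:: x, y, z & X] isT.
  apply: (nminor' q a b).
    have -> : [:: x, y, z & Q] = X'' ++ [:: q, a, b & Y].
      by rewrite EQ -[x :: _]/([:: x, y, z & X] ++ [:: a, b & Y]) EL -catA.
    exact: sub3_cat.
  move=> w wc ew; have := inQ w wc ew; rewrite EQ mem_cat !inE => /or4P [wX|/eqP->|/eqP->|wY].
  + by move: (hasPn nX w wX); rewrite ew.
  + by rewrite eqxx orbT.
  + by rewrite eqxx orbT.
  + by move: (hasPn nY w wY); rewrite ew.
- subst Q.
  set Xf := [:: x, y, z & X].
  have hMp : 0 < size M by rewrite lt0n size_eq0.
  have hPA : ind_path_from e a b (a :: M ++ [:: b]).
    have := arc (X := Xf) (a := a) (p := M ++ [:: b]) (Y := Y) Hc1.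
    by rewrite last_cat /=; apply => //; rewrite -catA.
  have Hc2 : is_hole e (b :: (Y ++ Xf ++ [:: a]) ++ M).
    have := rot_hole (size (Xf ++ a :: M)) Hc1.
    rewrite (_ : [:: x, y, z & X ++ a :: M ++ b :: Y] = (Xf ++ a :: M) ++ b :: Y);
      last by rewrite -catA.
    by rewrite rot_size_cat -!catA.
  have hPC : ind_path_from e a b (rev (b :: Y ++ Xf ++ [:: a])).
    apply: rev_ind.
    have := arc (X := [::]) (a := b) (p := Y ++ Xf ++ [:: a]) (Y := M) Hc2.
    by rewrite !last_cat /=; apply.
  have nab : e a b = false.
    have [_ _ _ _ HA] := hPA.
    have := HA 0 (size M).+1; rewrite /= nth_cat ltnn subnn /= => ->; rewrite ?size_cat //=.
    + by case: (size M) hMp.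
    + by rewrite addn1.
  have aneb : a != b.
    have [_ _ _ huA _] := hPA.
    by move: huA => /= /andP [H _]; apply: contraNneq H => ->; rewrite mem_cat inE eqxx orbT.
  have Ftheta w : w \in [:: x, y, z & X ++ a :: M ++ b :: Y] -> e v w = (w == a) || (w == b).
    move=> wc; apply/idP/idP.
    + move=> ew; have := inQ w wc ew; rewrite mem_cat inE mem_cat inE.
      case/or4P => [wX|->//|wM|/orP [->|wY]]; rewrite ?orbT //.
      * by move: (hasPn nX w wX); rewrite ew.
      * by move: (hasPn nMM w wM); rewrite ew.
      * by move: (hasPn nY w wY); rewrite ew.
    + by case/orP => /eqP ->.
  have subA : {subset a :: M ++ [:: b] <= [:: x, y, z & X ++ a :: M ++ b :: Y]}.
    by move=> w; memsolve.
  have subC : {subset rev (b :: Y ++ Xf ++ [:: a]) <= [:: x, y, z & X ++ a :: M ++ b :: Y]}.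
    by move=> w; rewrite /Xf; memsolve.
  have hu2 : uniq ((Xf ++ [:: a]) ++ M ++ b :: Y) by rewrite -catA.
  apply: noth; exists a, b, (a :: M ++ [:: b]), (rev (b :: Y ++ Xf ++ [:: a])), [:: a; v; b].
  split => //.
  + by rewrite nab.
  + split => //.
    split => //.
    * have anv : a != v.
        by apply/eqP => E; move: vnc1; rewrite -E (subA a) // inE eqxx.
      have vnb : v != b.
        by apply/eqP => E; move: vnc1; rewrite E (subA b) // !(inE, mem_cat) eqxx !orbT.
      by rewrite /= !inE negb_or aneb anv vnb.
    * have eav : e a v by rewrite sym.
      have ebv : e b v by rewrite sym.
      have nba : e b a = false by rewrite sym.
      move=> [|[|[|i']]] [|[|[|j']]] //= _ _; by rewrite ?irr ?va ?vb ?eav ?ebv ?nab ?nba.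
  + split.
    * move=> w wA wC; case: (boolP (w == a)) => [/eqP->|wa]; first by rewrite inE eqxx.
      case: (boolP (w == b)) => [/eqP->|wb]; first by rewrite !inE eqxx orbT.
      exfalso; apply: (@uniq_disj _ (Xf ++ [:: a]) M (b :: Y) w hu2).
        by move: wA wa wb; memsolve.
      by move: wC wa wb; rewrite /Xf; memsolve.
    * move=> w wA; rewrite !inE => /or3P [/eqP->|/eqP Ew|/eqP->]; rewrite ?eqxx ?orbT //; subst w.
      by move: (subA v wA); rewrite (negbTE vnc1).
    * move=> w wC; rewrite !inE => /or3P [/eqP->|/eqP Ew|/eqP->]; rewrite ?eqxx ?orbT //; subst w.
      by move: (subC v wC); rewrite (negbTE vnc1).
  + split.
    * exists [:: x, y, z & X ++ a :: M ++ b :: Y]; split => // w.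
      by rewrite /Xf; memsolve.
    * exists (v :: a :: M ++ [:: b]); split.
        apply: (cyc_hole sym irr hPA).
        - by rewrite /= size_cat /= addn1 ltnS.
        - by apply: contra vnc1; apply: subA.
        - by move=> w wA; apply: Ftheta; apply: subA.
      by move=> w; memsolve.
    * exists (v :: rev (b :: Y ++ Xf ++ [:: a])); split.
        apply: (cyc_hole sym irr hPC).
        - by rewrite size_rev /= !size_cat /= !addnS.
        - by apply: contra vnc1; apply: subC.
        - by move=> w wC; apply: Ftheta; apply: subC.
      by move=> w; rewrite /Xf; memsolve.
Qed.
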